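(* Let $F$ be an $F_\sigma$ subset of $[0,1]$ with $0\in F$, and let $k\geq 3$ be an integer. Then there exist non-empty, convex and closed subsets $A_1,A_2,\dots,A_k\subset\mathbb R^3$ such that $$F=\{\alpha\in[0,1]:P_{A_k}^\alpha P_{A_{k-1}}^\alpha\cdots P_{A_1}^\alpha\text{ has a fixed point}\}.$$
   Context: For a non-empty, convex, closed subset $A$ of a real Hilbert space $H$ (here $H=\mathbb R^3$ with the Euclidean inner product), $P_A:H\to A$ denotes the metric (nearest-point) projection onto $A$. For $\alpha\in[0,1]$, the $\alpha$-relaxed projection onto $A$ is the map $P_A^\alpha:H\to H$, $P_A^\alpha(x)=\alpha P_A(x)+(1-\alpha)x$. Compositions are written as products. *)

(* Defs.v *)
From Stdlib Require Import Reals Lra Rtopology ClassicalEpsilon.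
Open Scope R_scope.

Definition vec3 : Type := (R * R * R)%type.

Definition vadd (x y : vec3) : vec3 :=
  let '(x1, x2, x3) := x in let '(y1, y2, y3) := y in (x1 + y1, x2 + y2, x3 + y3).
Definition vscale (a : R) (x : vec3) : vec3 :=
  let '(x1, x2, x3) := x in (a * x1, a * x2, a * x3).
Definition vsub (x y : vec3) : vec3 := vadd x (vscale (-1) y).
Definition inner (x y : vec3) : R :=
  let '(x1, x2, x3) := x in let '(y1, y2, y3) := y in x1 * y1 + x2 * y2 + x3 * y3.
Definition vnorm (x : vec3) : R := sqrt (inner x x).
Definition vdist (x y : vec3) : R := vnorm (vsub x y).

Definition nonempty3 (A : vec3 -> Prop) : Prop := exists x, A x.
Definition convex3 (A : vec3 -> Prop) : Prop :=
  forall x y t, A x -> A y -> 0 <= t <= 1 -> A (vadd (vscale t x) (vscale (1 - t) y)).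
Definition open3 (U : vec3 -> Prop) : Prop :=
  forall x, U x -> exists eps, 0 < eps /\ forall y, vdist y x < eps -> U y.
Definition closed3 (A : vec3 -> Prop) : Prop := open3 (fun x => ~ A x).

Definition is_nearest (A : vec3 -> Prop) (x p : vec3) : Prop :=
  A p /\ forall a, A a -> vdist x p <= vdist x a.

(* metric projection P_A (well-defined & unique for nonempty closed convex A) *)
Definition proj (A : vec3 -> Prop) (x : vec3) : vec3 :=
  epsilon (inhabits (0, 0, 0)) (fun p => is_nearest A x p).

Definition relaxed_proj (alpha : R) (A : vec3 -> Prop) (x : vec3) : vec3 :=
  vadd (vscale alpha (proj A x)) (vscale (1 - alpha) x).

(* comp_relaxed A alpha n = P_{A n}^alpha ... P_{A 1}^alpha  (identity for n = 0) *)
Fixpoint comp_relaxed (A : nat -> vec3 -> Prop) (alpha : R) (n : nat) (x : vec3) : vec3 :=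
  match n with
  | O => x
  | S m => relaxed_proj alpha (A (S m)) (comp_relaxed A alpha m x)
  end.

Definition F_sigma (F : R -> Prop) : Prop :=
  exists C : nat -> R -> Prop,
    (forall n, closed_set (C n)) /\ (forall a, F a <-> exists n, C n a).

(* Main.v *)
Require Import Defs.
From Stdlib Require Import Reals Lra Psatz Rtopology ClassicalEpsilon Classical.
Open Scope R_scope.


Definition d2 (x y : vec3) : R := inner (vsub x y) (vsub x y).

Lemma inner_self_ge0 x : 0 <= inner x x.
Proof. destruct x as [[a b] c]; simpl; nra. Qed.

Lemma d2_ge0 x y : 0 <= d2 x y.
Proof. apply inner_self_ge0. Qed.

Lemma d2_E x1 x2 x3 y1 y2 y3 :
  d2 (x1,x2,x3) (y1,y2,y3) = (x1-y1)^2 + (x2-y2)^2 + (x3-y3)^2.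
Proof. unfold d2; simpl; ring. Qed.

Lemma vdist_le_iff x p a : vdist x p <= vdist x a <-> d2 x p <= d2 x a.
Proof.
  unfold vdist, vnorm; fold (d2 x p); fold (d2 x a); split; intro H.
  - apply sqrt_le_0; auto using d2_ge0.
  - apply sqrt_le_1_alt; auto.
Qed.

Lemma abs_le_sqrt3 a b c : Rabs a <= sqrt (a*a + b*b + c*c).
Proof.
  rewrite <- sqrt_Rsqr_abs. apply sqrt_le_1_alt. unfold Rsqr. nra.
Qed.

Lemma vdist_coord x1 x2 x3 y1 y2 y3 :
  Rabs (x1 - y1) <= vdist (x1,x2,x3) (y1,y2,y3) /\
  Rabs (x2 - y2) <= vdist (x1,x2,x3) (y1,y2,y3) /\
  Rabs (x3 - y3) <= vdist (x1,x2,x3) (y1,y2,y3).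
Proof.
  unfold vdist, vnorm; simpl.
  replace (x1 + -1 * y1) with (x1 - y1) by ring.
  replace (x2 + -1 * y2) with (x2 - y2) by ring.
  replace (x3 + -1 * y3) with (x3 - y3) by ring.
  split; [|split].
  - apply abs_le_sqrt3.
  - replace ((x1 - y1) * (x1 - y1) + (x2 - y2) * (x2 - y2) + (x3 - y3) * (x3 - y3))
      with ((x2 - y2) * (x2 - y2) + (x1 - y1) * (x1 - y1) + (x3 - y3) * (x3 - y3)) by ring.
    apply abs_le_sqrt3.
  - replace ((x1 - y1) * (x1 - y1) + (x2 - y2) * (x2 - y2) + (x3 - y3) * (x3 - y3))
      with ((x3 - y3) * (x3 - y3) + (x2 - y2) * (x2 - y2) + (x1 - y1) * (x1 - y1)) by ring.
    apply abs_le_sqrt3.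
Qed.

Lemma vdist_bound x1 x2 x3 y1 y2 y3 :
  vdist (x1,x2,x3) (y1,y2,y3) <= Rabs (x1 - y1) + Rabs (x2 - y2) + Rabs (x3 - y3).
Proof.
  unfold vdist, vnorm; simpl.
  replace (x1 + -1 * y1) with (x1 - y1) by ring.
  replace (x2 + -1 * y2) with (x2 - y2) by ring.
  replace (x3 + -1 * y3) with (x3 - y3) by ring.
  set (a := x1 - y1); set (b := x2 - y2); set (c := x3 - y3).
  rewrite <- (sqrt_Rsqr (Rabs a + Rabs b + Rabs c)).
  2:{ pose proof (Rabs_pos a); pose proof (Rabs_pos b); pose proof (Rabs_pos c); lra. }
  apply sqrt_le_1_alt. unfold Rsqr.
  pose proof (Rabs_pos a); pose proof (Rabs_pos b); pose proof (Rabs_pos c).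
  assert (a*a = Rabs a * Rabs a) by (rewrite <- Rabs_mult; rewrite Rabs_right; nra).
  assert (b*b = Rabs b * Rabs b) by (rewrite <- Rabs_mult; rewrite Rabs_right; nra).
  assert (c*c = Rabs c * Rabs c) by (rewrite <- Rabs_mult; rewrite Rabs_right; nra).
  nra.
Qed.

Definition Hset (P : R -> R -> R -> R -> Prop) (x : vec3) : Prop :=
  forall c1 c2 c3 c0, P c1 c2 c3 c0 ->
    c0 <= c1 * fst (fst x) + c2 * snd (fst x) + c3 * snd x.

Lemma Hset_convex P : convex3 (Hset P).
Proof.
  intros [[x1 x2] x3] [[y1 y2] y3] t Hx Hy Ht c1 c2 c3 c0 HP.
  specialize (Hx _ _ _ _ HP); specialize (Hy _ _ _ _ HP); simpl in *. nra.
Qed.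

Lemma Hset_closed P : closed3 (Hset P).
Proof.
  intros [[x1 x2] x3] Hn.
  unfold Hset in Hn.
  apply not_all_ex_not in Hn as [c1 Hn]. apply not_all_ex_not in Hn as [c2 Hn].
  apply not_all_ex_not in Hn as [c3 Hn]. apply not_all_ex_not in Hn as [c0 Hn].
  apply imply_to_and in Hn as [HP Hlt]. simpl in Hlt. apply Rnot_le_lt in Hlt.
  set (M := Rabs c1 + Rabs c2 + Rabs c3 + 1).
  assert (HM : 0 < M) by (unfold M; pose proof (Rabs_pos c1); pose proof (Rabs_pos c2); pose proof (Rabs_pos c3); lra).
  exists ((c0 - (c1*x1+c2*x2+c3*x3)) / M). split.
  - apply Rdiv_lt_0_compat; lra.
  - intros [[y1 y2] y3] Hd Hy. specialize (Hy _ _ _ _ HP). simpl in Hy.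
    destruct (vdist_coord y1 y2 y3 x1 x2 x3) as [h1 [h2 h3]].
    set (d := vdist (y1,y2,y3) (x1,x2,x3)) in *.
    assert (E: c1*y1+c2*y2+c3*y3 - (c1*x1+c2*x2+c3*x3) <= M * d).
    { assert (c1*(y1-x1) <= Rabs c1 * d).
      { eapply Rle_trans. apply Rle_abs. rewrite Rabs_mult. apply Rmult_le_compat_l; auto using Rabs_pos. }
      assert (c2*(y2-x2) <= Rabs c2 * d).
      { eapply Rle_trans. apply Rle_abs. rewrite Rabs_mult. apply Rmult_le_compat_l; auto using Rabs_pos. }
      assert (c3*(y3-x3) <= Rabs c3 * d).
      { eapply Rle_trans. apply Rle_abs. rewrite Rabs_mult. apply Rmult_le_compat_l; auto using Rabs_pos. }
      assert (0 <= d) by (unfold d, vdist, vnorm; apply sqrt_pos).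
      unfold M; nra. }
    apply (Rmult_lt_compat_l M) in Hd; auto.
    replace (M * ((c0 - (c1 * x1 + c2 * x2 + c3 * x3)) / M)) with (c0 - (c1 * x1 + c2 * x2 + c3 * x3)) in Hd by (field; lra).
    lra.
Qed.

Lemma nearest_var A x p : convex3 A -> is_nearest A x p ->
  forall a, A a -> inner (vsub x p) (vsub a p) <= 0.
Proof.
  intros HC [Hp Hn] a Ha.
  assert (key : forall t, 0 < t <= 1 ->
     2 * t * inner (vsub x p) (vsub a p) <= t * t * inner (vsub a p) (vsub a p)).
  { intros t Ht. assert (Hat := HC a p t Ha Hp ltac:(lra)).
    specialize (Hn _ Hat). apply vdist_le_iff in Hn. unfold d2 in Hn.
    destruct x as [[x1 x2] x3], p as [[p1 p2] p3], a as [[a1 a2] a3]; simpl in *. nra. }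
  set (c := inner (vsub x p) (vsub a p)) in *.
  set (L := inner (vsub a p) (vsub a p)) in *.
  assert (HL : 0 <= L) by apply inner_self_ge0.
  destruct (Rle_or_lt c 0) as [h|h]; auto.
  exfalso. set (t := c / (c + L)).
  assert (Ht1 : 0 < t) by (unfold t; apply Rdiv_lt_0_compat; lra).
  assert (Ht2 : t <= 1) by (unfold t; apply Rmult_le_reg_r with (c+L); [lra|]; field_simplify; lra).
  specialize (key t (conj Ht1 Ht2)).
  assert (t * (c + L) = c) by (unfold t; field; lra).
  nra.
Qed.

Lemma var_nearest A x p : A p ->
  (forall a, A a -> inner (vsub x p) (vsub a p) <= 0) -> is_nearest A x p.
Proof.
  intros Hp H. split; auto. intros a Ha. apply vdist_le_iff. specialize (H a Ha).
  pose proof (inner_self_ge0 (vsub a p)).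
  unfold d2. destruct x as [[x1 x2] x3], p as [[p1 p2] p3], a as [[a1 a2] a3]; simpl in *. nra.
Qed.

Lemma nearest_unique A x p q : convex3 A -> is_nearest A x p -> is_nearest A x q -> p = q.
Proof.
  intros HC [Hp Hnp] [Hq Hnq].
  assert (Hm := HC p q (1/2) Hp Hq ltac:(lra)).
  pose proof (Hnp _ Hm) as h1. pose proof (Hnp _ Hq) as h2. pose proof (Hnq _ Hp) as h3.
  apply vdist_le_iff in h1, h2, h3. unfold d2 in *.
  destruct x as [[x1 x2] x3], p as [[p1 p2] p3], q as [[q1 q2] q3]; simpl in *.
  assert (HH : (p1-q1)^2 + (p2-q2)^2 + (p3-q3)^2 <= 0).
  { match type of h1 with ?l <= ?r => assert (E : r = (l + ((x1 + -1 * q1) * (x1 + -1 * q1) + (x2 + -1 * q2) * (x2 + -1 * q2) + (x3 + -1 * q3) * (x3 + -1 * q3)))/2 - ((p1-q1)^2 + (p2-q2)^2 + (p3-q3)^2)/4) by (field_simplify; ring_simplify; field) end.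
    lra. }
  pose proof (pow2_ge_0 (p1-q1)); pose proof (pow2_ge_0 (p2-q2)); pose proof (pow2_ge_0 (p3-q3)).
  assert (e1 : (p1-q1)^2 = 0) by lra. assert (e2 : (p2-q2)^2 = 0) by lra. assert (e3 : (p3-q3)^2 = 0) by lra.
  assert (f1 : p1 = q1) by nra. assert (f2 : p2 = q2) by nra. assert (f3 : p3 = q3) by nra.
  subst; reflexivity.
Qed.

Lemma proj_char A x p : convex3 A -> A p ->
  (forall a, A a -> inner (vsub x p) (vsub a p) <= 0) -> proj A x = p.
Proof.
  intros HC Hp H. assert (Hn := var_nearest A x p Hp H).
  unfold proj. apply (nearest_unique A x); auto.
  apply epsilon_spec. exists p; exact Hn.
Qed.

Lemma vec_eta (y : vec3) : y = (fst (fst y), snd (fst y), snd y).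
Proof. destruct y as [[a b] c]; reflexivity. Qed.

Lemma d2_proj x y : d2 x y =
  (fst (fst x) - fst (fst y)) * (fst (fst x) - fst (fst y)) +
  (snd (fst x) - snd (fst y)) * (snd (fst x) - snd (fst y)) +
  (snd x - snd y) * (snd x - snd y).
Proof. destruct x as [[a b] c], y as [[d e] f]; unfold d2; simpl; ring. Qed.

Lemma div_lt_helper a b c : 0 < b -> a < c * b -> a / b < c.
Proof. intros Hb H. apply Rmult_lt_reg_r with b; auto. replace (a / b * b) with a by (field; lra). lra. Qed.

Lemma cauchy_of_bound (u : nat -> R) :
  (forall n k, (u n - u k)^2 <= 2/(INR n+1) + 2/(INR k+1)) -> Cauchy_crit u.
Proof.
  intros H eps Heps.
  destruct (INR_archimed (eps*eps) 4) as [N HN]; [nra|].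
  exists N. intros n k Hn Hk. unfold Rdist.
  specialize (H n k).
  apply le_INR in Hn. apply le_INR in Hk.
  pose proof (pos_INR N).
  assert (2/(INR n+1) <= 2/(INR N+1)).
  { apply Rmult_le_compat_l; [lra|]. apply Rinv_le_contravar; lra. }
  assert (2/(INR k+1) <= 2/(INR N+1)).
  { apply Rmult_le_compat_l; [lra|]. apply Rinv_le_contravar; lra. }
  assert (4/(INR N+1) < eps*eps).
  { apply div_lt_helper; [lra|]. nra. }
  assert (Habs : Rabs (u n - u k) * Rabs (u n - u k) < eps * eps).
  { rewrite <- Rabs_mult. rewrite Rabs_right. nra. apply Rle_ge. apply Rle_0_sqr. }
  pose proof (Rabs_pos (u n - u k)). nra.
Qed.

Lemma parallelogram x p q : d2 p q = 2 * d2 x p + 2 * d2 x q - 4 * d2 x (vadd (vscale (1/2) p) (vscale (1-1/2) q)).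
Proof. destruct x as [[a b] c], p as [[d e] f], q as [[g h] i]; unfold d2; simpl; field. Qed.

Lemma sq_le1 a b c : a^2 <= a*a + b*b + c*c.
Proof. pose proof (Rle_0_sqr b); pose proof (Rle_0_sqr c); unfold Rsqr in *; simpl; lra. Qed.
Lemma sq_le2 a b c : b^2 <= a*a + b*b + c*c.
Proof. pose proof (Rle_0_sqr a); pose proof (Rle_0_sqr c); unfold Rsqr in *; simpl; lra. Qed.
Lemma sq_le3 a b c : c^2 <= a*a + b*b + c*c.
Proof. pose proof (Rle_0_sqr b); pose proof (Rle_0_sqr a); unfold Rsqr in *; simpl; lra. Qed.

Lemma cv_const (c : R) : Un_cv (fun _ => c) c.
Proof. intros eps He; exists 0%nat; intros; unfold Rdist; rewrite Rminus_diag, Rabs_R0; lra. Qed.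

Lemma nearest_exists A x : nonempty3 A -> convex3 A -> closed3 A -> exists p, is_nearest A x p.
Proof.
  intros [a0 Ha0] HC Hcl.
  set (E := fun r => exists a, A a /\ r = - d2 x a).
  assert (Hb : bound E).
  { exists 0. intros r [a [_ ->]]. pose proof (d2_ge0 x a). lra. }
  assert (Hne : exists r, E r) by (exists (- d2 x a0); exists a0; auto).
  destruct (completeness E Hb Hne) as [l [Hub Hlub]].
  set (m := - l).
  assert (Hlow : forall a, A a -> m <= d2 x a).
  { intros a Ha. assert (E (- d2 x a)) by (exists a; auto). specialize (Hub _ H). unfold m; lra. }
  assert (Happ : forall eps, 0 < eps -> exists a, A a /\ d2 x a < m + eps).
  { intros eps He. apply NNPP. intro Hn.
    assert (is_upper_bound E (l - eps)).
    { intros r [a [Ha ->]]. apply Rnot_lt_le. intro Hlt. apply Hn. exists a. split; auto. unfold m; lra. }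
    specialize (Hlub _ H). lra. }
  assert (Hseq : forall n : nat, exists a, A a /\ d2 x a < m + 1/(INR n + 1)).
  { intro n. apply Happ. pose proof (pos_INR n). apply Rdiv_lt_0_compat; lra. }
  set (s := fun n => proj1_sig (constructive_indefinite_description _ (Hseq n))).
  assert (Hs : forall n, A (s n) /\ d2 x (s n) < m + 1/(INR n + 1)).
  { intro n. unfold s. destruct (constructive_indefinite_description _ (Hseq n)); auto. }
  assert (Hcau : forall n k, d2 (s n) (s k) <= 2/(INR n+1) + 2/(INR k+1)).
  { intros n k. destruct (Hs n) as [An dn]. destruct (Hs k) as [Ak dk].
    assert (Hm := HC (s n) (s k) (1/2) An Ak ltac:(lra)).
    specialize (Hlow _ Hm).
    rewrite (parallelogram x (s n) (s k)). lra. }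
  set (u1 := fun n => fst (fst (s n))).
  set (u2 := fun n => snd (fst (s n))).
  set (u3 := fun n => snd (s n)).
  assert (C1 : Cauchy_crit u1).
  { apply cauchy_of_bound. intros n k. specialize (Hcau n k). rewrite d2_proj in Hcau.
    unfold u1. eapply Rle_trans; [apply sq_le1|exact Hcau]. }
  assert (C2 : Cauchy_crit u2).
  { apply cauchy_of_bound. intros n k. specialize (Hcau n k). rewrite d2_proj in Hcau.
    unfold u2. eapply Rle_trans; [apply sq_le2|exact Hcau]. }
  assert (C3 : Cauchy_crit u3).
  { apply cauchy_of_bound. intros n k. specialize (Hcau n k). rewrite d2_proj in Hcau.
    unfold u3. eapply Rle_trans; [apply sq_le3|exact Hcau]. }
  destruct (R_complete u1 C1) as [l1 L1].
  destruct (R_complete u2 C2) as [l2 L2].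
  destruct (R_complete u3 C3) as [l3 L3].
  exists (l1, l2, l3). split.
  - apply NNPP. intro HnA. destruct (Hcl _ HnA) as [eps [He Hball]].
    destruct (L1 (eps/3) ltac:(lra)) as [N1 H1].
    destruct (L2 (eps/3) ltac:(lra)) as [N2 H2].
    destruct (L3 (eps/3) ltac:(lra)) as [N3 H3].
    set (N := (N1 + N2 + N3)%nat).
    specialize (H1 N ltac:(unfold N; lia)). specialize (H2 N ltac:(unfold N; lia)).
    specialize (H3 N ltac:(unfold N; lia)). unfold Rdist in *.
    apply (Hball (s N)); [| apply Hs].
    rewrite (vec_eta (s N)). eapply Rle_lt_trans. apply vdist_bound.
    unfold u1, u2, u3 in *. lra.
  - intros a Ha. apply vdist_le_iff. eapply Rle_trans; [|apply (Hlow a Ha)].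
    destruct x as [[x1 x2] x3].
    set (w := fun n => (x1 - u1 n) * (x1 - u1 n) + (x2 - u2 n) * (x2 - u2 n) + (x3 - u3 n) * (x3 - u3 n)).
    assert (Hw : Un_cv w ((x1 - l1) * (x1 - l1) + (x2 - l2) * (x2 - l2) + (x3 - l3) * (x3 - l3))).
    { unfold w. apply CV_plus; [apply CV_plus|]; apply CV_mult; apply CV_minus; auto using cv_const. }
    assert (Hwn : forall n, w n < m + 1/(INR n + 1)).
    { intro n. destruct (Hs n) as [_ h]. rewrite d2_proj in h. unfold w, u1, u2, u3. simpl in h. exact h. }
    rewrite d2_E.
    set (D := (x1 - l1) * (x1 - l1) + (x2 - l2) * (x2 - l2) + (x3 - l3) * (x3 - l3)) in *.
    replace ((x1 - l1) ^ 2 + (x2 - l2) ^ 2 + (x3 - l3) ^ 2) with D by (unfold D; ring).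
    apply Rnot_lt_le. intro Hlt.
    destruct (Hw ((D - m)/2) ltac:(lra)) as [N1 HN1].
    destruct (INR_archimed ((D - m)/2) 1 ltac:(lra)) as [N2 HN2].
    set (n := (N1 + N2)%nat).
    specialize (HN1 n ltac:(unfold n; lia)). specialize (Hwn n). unfold Rdist in HN1.
    assert (INR N2 <= INR n) by (apply le_INR; unfold n; lia).
    pose proof (pos_INR N2).
    assert (1/(INR n + 1) < (D - m)/2).
    { apply div_lt_helper; [lra|]. nra. }
    apply Rabs_def2 in HN1. lra.
Qed.

Definition rr (a : R) : R := (2 - a)^2 / (1 + (1-a) + (1-a)^2).

Lemma Q_pos b : 0 < 1 + b + b^2.
Proof. nra. Qed.

Lemma rr_range a : 0 <= a <= 1 -> 1 <= rr a <= 4/3.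
Proof.
  intros Ha. unfold rr. set (b := 1 - a). replace (2 - a) with (1 + b) by (unfold b; ring).
  assert (0 <= b <= 1) by (unfold b; lra). pose proof (Q_pos b).
  split.
  - apply Rmult_le_reg_r with (1 + b + b^2); auto. unfold Rdiv. rewrite Rmult_assoc, Rinv_l by lra. nra.
  - apply Rmult_le_reg_r with (1 + b + b^2); auto. unfold Rdiv. rewrite Rmult_assoc, Rinv_l by lra. nra.
Qed.

Lemma rr_sep a c : 0 <= a <= 1 -> 0 <= c <= 1 ->
  (a - c)^2 * a^2 / 81 <= (rr a - rr c)^2.
Proof.
  intros Ha Hc. unfold rr.
  assert (Hb : exists b, a = 1 - b) by (exists (1 - a); ring). destruct Hb as [b ->].
  assert (Hd : exists d, c = 1 - d) by (exists (1 - c); ring). destruct Hd as [d ->].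
  replace (2 - (1 - b)) with (1 + b) by ring. replace (2 - (1 - d)) with (1 + d) by ring.
  replace (1 - (1 - b)) with b by ring. replace (1 - (1 - d)) with d by ring.
  assert (0 <= b <= 1) by lra. assert (0 <= d <= 1) by lra.
  pose proof (Q_pos b). pose proof (Q_pos d).
  assert (E : (1 + b) ^ 2 / (1 + b + b ^ 2) - (1 + d) ^ 2 / (1 + d + d ^ 2)
              = (b - d) * (1 - b * d) / ((1 + b + b^2) * (1 + d + d^2))) by (field; lra).
  rewrite E. clear E.
  set (P := (1 + b + b^2) * (1 + d + d^2)).
  assert (HP : 0 < P <= 9).
  { assert (1 + b + b^2 <= 3) by nra. assert (1 + d + d^2 <= 3) by nra.
    unfold P; split; [apply Rmult_lt_0_compat; lra|].
    replace 9 with (3 * 3) by ring. apply Rmult_le_compat; lra. }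
  assert (Hbd : 1 - b <= 1 - b * d) by nra.
  assert (Hb0 : 0 <= 1 - b) by lra.
  replace (1 - b - (1 - d)) with (d - b) by ring.
  assert (Hgoal : (d - b)^2 * (1-b)^2 / 81 <= (b - d)^2 * (1 - b*d)^2 / (P * P)).
  { apply Rle_trans with ((b - d)^2 * (1 - b*d)^2 / 81).
    - unfold Rdiv. apply Rmult_le_compat_r; [left; apply Rinv_0_lt_compat; lra|]. replace ((d-b)^2) with ((b-d)^2) by ring.
      apply Rmult_le_compat_l; [apply pow2_ge_0|]. apply pow_incr; lra.
    - unfold Rdiv. apply Rmult_le_compat_l.
      + apply Rmult_le_pos; apply pow2_ge_0.
      + apply Rinv_le_contravar; [apply Rmult_lt_0_compat; lra|]. replace 81 with (9*9) by ring. apply Rmult_le_compat; lra. }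
  replace (((b - d) * (1 - b * d) / P) ^ 2) with ((b - d)^2 * (1 - b*d)^2 / (P * P)) by (field; lra).
  exact Hgoal.
Qed.

Lemma t_bounds t : 0 < t -> 1 <= t^4 <= 4/3 -> 1 <= t <= 2.
Proof.
  intros Ht [H1 H2]. split.
  - apply Rnot_lt_le; intro h. assert (t^4 < 1).
    { assert (t^2 < 1) by nra. nra. } lra.
  - apply Rnot_lt_le; intro h. assert (16 < t^4).
    { assert (4 < t^2) by nra. nra. } lra.
Qed.

Lemma t4_diff t u : 1 <= t <= 2 -> 1 <= u <= 2 -> (t^4 - u^4)^2 <= 1024 * (t - u)^2.
Proof.
  intros Ht Hu.
  replace (t^4 - u^4) with ((t - u) * ((t + u) * (t^2 + u^2))) by ring.
  assert (0 <= (t + u) * (t^2 + u^2) <= 32).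
  { split; [nra|]. assert (t^2 + u^2 <= 8) by nra. nra. }
  set (K := (t + u) * (t ^ 2 + u ^ 2)) in *.
  replace (((t - u) * K) ^ 2) with ((t-u)^2 * (K*K)) by ring.
  replace (1024 * (t - u) ^ 2) with ((t-u)^2 * 1024) by ring.
  apply Rmult_le_compat_l; [apply pow2_ge_0|]. replace 1024 with (32*32) by ring. apply Rmult_le_compat; lra.
Qed.

Definition sig (s u v : R) : R := u / s + s * v - 2.

Lemma sig_E s t : 0 < s -> 0 < t -> sig s t (1/t) = (t - s)^2 / (t * s).
Proof. intros; unfold sig; field; lra. Qed.

Lemma sig_nonneg s t : 0 < s -> 0 < t -> 0 <= sig s t (1/t).
Proof. intros; rewrite sig_E; auto. apply Rle_mult_inv_pos; [apply pow2_ge_0 | apply Rmult_lt_0_compat; lra]. Qed.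

Lemma sig_lower s t : 1 <= s <= 2 -> 1 <= t <= 2 -> (t - s)^2 / 4 <= sig s t (1/t).
Proof.
  intros Hs Ht. rewrite sig_E by lra. unfold Rdiv. apply Rmult_le_compat_l; [apply pow2_ge_0|].
  apply Rinv_le_contravar; [apply Rmult_lt_0_compat; lra|]. replace 4 with (2*2) by ring. apply Rmult_le_compat; lra.
Qed.

Definition A1 : vec3 -> Prop := Hset (fun c1 c2 c3 c0 =>
  (c1 = 0 /\ c2 = 1 /\ c3 = 0 /\ c0 = 0) \/ (c1 = 0 /\ c2 = -1 /\ c3 = 0 /\ c0 = 0)).
Definition A2 : vec3 -> Prop := Hset (fun c1 c2 c3 c0 =>
  (c1 = 0 /\ c2 = 1 /\ c3 = 0 /\ c0 = 0) \/ (c1 = 0 /\ c2 = -1 /\ c3 = 0 /\ c0 = 0) \/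
  (c1 = 1 /\ c2 = 0 /\ c3 = 0 /\ c0 = 0) \/ (c1 = -1 /\ c2 = 0 /\ c3 = 0 /\ c0 = 0)).
Definition Aall : vec3 -> Prop := Hset (fun _ _ _ _ => False).

Lemma A1_mem x1 x2 x3 : A1 (x1,x2,x3) <-> x2 = 0.
Proof.
  split.
  - intro H. pose proof (H 0 1 0 0 ltac:(left; repeat split)).
    pose proof (H 0 (-1) 0 0 ltac:(right; repeat split)). simpl in *. lra.
  - intros -> c1 c2 c3 c0 [[-> [-> [-> ->]]]|[-> [-> [-> ->]]]]; simpl; lra.
Qed.

Lemma A2_mem x1 x2 x3 : A2 (x1,x2,x3) <-> x1 = 0 /\ x2 = 0.
Proof.
  split.
  - intro H. pose proof (H 0 1 0 0 ltac:(left; repeat split)).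
    pose proof (H 0 (-1) 0 0 ltac:(right; left; repeat split)).
    pose proof (H 1 0 0 0 ltac:(right; right; left; repeat split)).
    pose proof (H (-1) 0 0 0 ltac:(right; right; right; repeat split)). simpl in *. lra.
  - intros [-> ->] c1 c2 c3 c0 [[-> [-> [-> ->]]]|[[-> [-> [-> ->]]]|[[-> [-> [-> ->]]]|[-> [-> [-> ->]]]]]]; simpl; lra.
Qed.

Lemma proj_A1 x1 x2 x3 : proj A1 (x1,x2,x3) = (x1,0,x3).
Proof.
  apply proj_char. apply Hset_convex. apply A1_mem; auto.
  intros [[a1 a2] a3] Ha. apply A1_mem in Ha. subst. simpl. lra.
Qed.

Lemma proj_A2 x1 x2 x3 : proj A2 (x1,x2,x3) = (0,0,x3).
Proof.
  apply proj_char. apply Hset_convex. apply A2_mem; auto.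
  intros [[a1 a2] a3] Ha. apply A2_mem in Ha as [-> ->]. simpl. lra.
Qed.

Lemma proj_all x : proj Aall x = x.
Proof.
  apply proj_char. apply Hset_convex. intros c1 c2 c3 c0 [].
  intros [[a1 a2] a3] _. destruct x as [[x1 x2] x3]; simpl; ring_simplify; lra.
Qed.

Lemma relaxed_all al x : relaxed_proj al Aall x = x.
Proof. unfold relaxed_proj. rewrite proj_all. destruct x as [[x1 x2] x3]; simpl; f_equal; [f_equal|]; ring. Qed.

Lemma relaxed_A1 al x1 x2 x3 : relaxed_proj al A1 (x1,x2,x3) = (x1, (1-al)*x2, x3).
Proof. unfold relaxed_proj. rewrite proj_A1. simpl; f_equal; [f_equal|]; ring. Qed.

Lemma relaxed_A2 al x1 x2 x3 : relaxed_proj al A2 (x1,x2,x3) = ((1-al)*x1, (1-al)*x2, x3).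
Proof. unfold relaxed_proj. rewrite proj_A2. simpl; f_equal; [f_equal|]; ring. Qed.

Lemma relaxed_zero B x : relaxed_proj 0 B x = x.
Proof. unfold relaxed_proj. destruct (proj B x) as [[a b] c], x as [[x1 x2] x3]; simpl; f_equal; [f_equal|]; ring. Qed.

Lemma comp_zero A k x : comp_relaxed A 0 k x = x.
Proof. induction k; simpl; auto. rewrite relaxed_zero; auto. Qed.

Definition Afam (B3 : vec3 -> Prop) (i : nat) : vec3 -> Prop :=
  match i with 1%nat => A1 | 2%nat => A2 | 3%nat => B3 | _ => Aall end.

Lemma comp_Afam B3 al k x : (3 <= k)%nat ->
  comp_relaxed (Afam B3) al k x =
  relaxed_proj al B3 (relaxed_proj al A2 (relaxed_proj al A1 x)).
Proof.
  intro hk. induction k as [|k IH]; [lia|].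
  destruct (Nat.eq_dec k 2) as [->|hne].
  - reflexivity.
  - simpl comp_relaxed. assert (Afam B3 (S k) = Aall).
    { unfold Afam. destruct k as [|[|[|k]]]; try lia; reflexivity. }
    change (relaxed_proj al (Afam B3 (S k)) (comp_relaxed (Afam B3) al k x) = relaxed_proj al B3 (relaxed_proj al A2 (relaxed_proj al A1 x))).
    rewrite H, relaxed_all. apply IH. lia.
Qed.

Definition idx (C : nat -> R -> Prop) (N : nat) (s A : R) : Prop :=
  (1 <= N)%nat /\ 0 < s /\ INR N * INR N <= A /\
  (forall a2 t2, 0 <= a2 <= 1 -> (exists n, (n <= N)%nat /\ C n a2) -> 0 < t2 ->
     t2^4 = rr a2 -> INR N <= A * sig s t2 (1/t2)).

Definition P3c (C : nat -> R -> Prop) (c1 c2 c3 c0 : R) : Prop :=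
  (exists s, 0 < s /\ c1 = 1/s /\ c2 = s /\ c3 = 0 /\ c0 = 2) \/
  (exists N s A, idx C N s A /\ c1 = A/s /\ c2 = A*s /\ c3 = 1 /\ c0 = INR N + 2*A).

Definition A3 C := Hset (P3c C).

Lemma A3_intro C u v z :
  (forall s, 0 < s -> 2 <= u/s + s*v) ->
  (forall N s A, idx C N s A -> INR N + 2*A <= A/s*u + A*s*v + z) -> A3 C (u,v,z).
Proof.
  intros H1 H2 c1 c2 c3 c0 [[s [hs [-> [-> [-> ->]]]]]|[N [s [A [hi [-> [-> [-> ->]]]]]]]]; simpl.
  - specialize (H1 s hs). replace (1/s*u) with (u/s) by (field; lra). lra.
  - specialize (H2 N s A hi). lra.
Qed.

Lemma A3_elim1 C u v z s : A3 C (u,v,z) -> 0 < s -> 2 <= u/s + s*v.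
Proof.
  intros H hs. specialize (H (1/s) s 0 2 ltac:(left; exists s; repeat split; auto)). simpl in H.
  replace (u/s) with (1/s*u) by (field; lra). lra.
Qed.

Lemma A3_elim2 C u v z N s A : A3 C (u,v,z) -> idx C N s A -> INR N + 2*A <= A/s*u + A*s*v + z.
Proof.
  intros H hi. specialize (H (A/s) (A*s) 1 (INR N + 2*A) ltac:(right; exists N, s, A; split; [exact hi|repeat split])).
  simpl in H. lra.
Qed.

Lemma s_inv_ge2 s : 0 < s -> 2 <= 1/s + s.
Proof.
  intro hs. assert (1/s + s - 2 = (s-1)^2/s) by (field; lra).
  assert (0 <= (s-1)^2/s) by (apply Rle_mult_inv_pos; [apply pow2_ge_0|lra]). lra.
Qed.

Lemma A3_interior C t e : 0 < t -> 0 < e -> A3 C (t+e, 1/t+e, 1/e).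
Proof.
  intros ht he. apply A3_intro.
  - intros s hs. pose proof (sig_nonneg s t hs ht). unfold sig in H.
    pose proof (s_inv_ge2 s hs).
    replace ((t+e)/s + s*(1/t+e)) with ((t/s + s*(1/t)) + e*(1/s + s)) by (field; lra).
    assert (0 <= e * (1/s+s)) by (apply Rmult_le_pos; lra). lra.
  - intros N s A [hN [hs [hA _]]].
    pose proof (sig_nonneg s t hs ht). unfold sig in H.
    pose proof (s_inv_ge2 s hs).
    assert (hN' : 1 <= INR N) by (apply (le_INR 1); auto).
    assert (hA0 : 0 <= A) by nra.
    replace (A/s*(t+e) + A*s*(1/t+e) + 1/e) with (A*(t/s + s*(1/t)) + A*e*(1/s+s) + 1/e) by (field; lra).
    assert (2*A <= A*(t/s + s*(1/t))) by nra.
    assert (2*A*e <= A*e*(1/s+s)).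
    { assert (0 <= A*e) by nra. nra. }
    assert (INR N <= 2 * A * e + 1/e).
    { assert (INR N * e <= 2 * (INR N * INR N) * e * e + 1).
      { assert (hw : INR N * e <= 2*(INR N * e)*(INR N * e) + 1) by nra. nra. }
      apply Rmult_le_reg_r with e; auto.
      replace ((2 * A * e + 1/e) * e) with (2*A*e*e + 1) by (field; lra).
      assert (2 * (INR N * INR N) * e * e <= 2*A*e*e).
      { assert (0 <= 2*e*e) by nra. nra. }
      lra. }
    lra.
Qed.

Lemma rr_b b : rr (1 - b) = (1+b)^2/(1+b+b^2).
Proof. unfold rr. f_equal; ring. Qed.

Lemma fourth_root r : 0 <= r -> exists t, 0 < t \/ r = 0 /\ t = 0 -> True.
Proof. intros; exists 0; auto. Qed.

Lemma fourth_root_pos r : 0 < r -> exists t, 0 < t /\ t^4 = r.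
Proof.
  intro hr. exists (sqrt (sqrt r)). split.
  - apply sqrt_lt_R0, sqrt_lt_R0; auto.
  - replace (sqrt (sqrt r) ^ 4) with ((sqrt (sqrt r) * sqrt (sqrt r)) * (sqrt (sqrt r) * sqrt (sqrt r))) by ring.
    rewrite sqrt_sqrt by (apply sqrt_pos). apply sqrt_sqrt; lra.
Qed.

Lemma aux_id1 t b a1 a2 : 0 < t -> 0 <= b -> - (t / (1 + b)) * (a1 - t) - t ^ 4 / (1 + b) * (1 / t) * (a2 - 1 / t) =
  - (t ^ 2 / (1 + b)) * (a1 / t + t * a2 - 2).
Proof. intros. field. lra. Qed.

Lemma fix_exists C al n0 : 0 < al <= 1 -> C n0 al ->
  exists x, relaxed_proj al (A3 C) (relaxed_proj al A2 (relaxed_proj al A1 x)) = x.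
Proof.
  intros Hal Hc.
  assert (Hr := rr_range al ltac:(lra)).
  destruct (fourth_root_pos (rr al) ltac:(lra)) as [t [ht ht4]].
  assert (Htb := t_bounds t ht ltac:(lra)).
  assert (Hb : exists b, al = 1 - b) by (exists (1 - al); ring). destruct Hb as [b Hbe].
  assert (hb : 0 <= b < 1) by lra.
  rewrite Hbe, rr_b in ht4.
  pose proof (Q_pos b) as hQ.
  set (Q := 1 + b + b^2) in *.
  exists (t/(1+b), (1/t)/Q, INR n0).
  rewrite relaxed_A1, relaxed_A2.
  set (y := ((1 - al) * (t / (1 + b)), (1 - al) * ((1 - al) * (1 / t / Q)), INR n0)).
  assert (Hp : proj (A3 C) y = (t, 1/t, INR n0)).
  { apply proj_char. apply Hset_convex.
    - apply A3_intro.
      + intros s hs. pose proof (sig_nonneg s t hs ht). unfold sig in H. lra.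
      + intros N s A [hN [hs [hA hsep]]].
        pose proof (sig_nonneg s t hs ht) as hsg.
        assert (hA0 : 0 <= A) by nra.
        replace (A/s*t + A*s*(1/t)) with (A * (sig s t (1/t)) + 2*A) by (unfold sig; field; lra).
        pose proof (pos_INR n0).
        destruct (Compare_dec.le_lt_dec n0 N) as [hle|hlt].
        * assert (INR N <= A * sig s t (1/t)).
          { apply hsep with al; auto; [lra| exists n0; auto | rewrite Hbe, rr_b; exact ht4]. }
          lra.
        * assert (INR N <= INR n0) by (apply le_INR; lia).
          assert (0 <= A * sig s t (1/t)) by (apply Rmult_le_pos; auto). lra.
    - intros [[a1 a2] a3] Ha. pose proof (A3_elim1 C a1 a2 a3 t Ha ht) as hc.
      unfold y. rewrite Hbe. simpl.
      assert (E1 : ((1 - (1 - b)) * (t / (1 + b)) + -1 * t) * (a1 + -1 * t) +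
        ((1 - (1 - b)) * ((1 - (1 - b)) * (1 / t / Q)) + -1 * (1 / t)) * (a2 + -1 * (1 / t)) +
        (INR n0 + -1 * INR n0) * (a3 + -1 * INR n0)
        = -(t/(1+b))*(a1 - t) - ((1+b)/Q)*(1/t)*(a2 - 1/t)).
      { unfold Q in *; field; repeat split; lra. }
      assert (E2 : (1+b)/Q = t^4/(1+b)) by (rewrite ht4; field; repeat split; lra).
      assert (E : ((1 - (1 - b)) * (t / (1 + b)) + -1 * t) * (a1 + -1 * t) +
        ((1 - (1 - b)) * ((1 - (1 - b)) * (1 / t / Q)) + -1 * (1 / t)) * (a2 + -1 * (1 / t)) +
        (INR n0 + -1 * INR n0) * (a3 + -1 * INR n0) = - (t^2/(1+b)) * (a1/t + t*a2 - 2)).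
      { rewrite E1, E2. apply aux_id1; lra. }
      rewrite E. assert (0 <= t^2/(1+b)) by (apply Rle_mult_inv_pos; [apply pow2_ge_0|lra]).
      nra. }
  unfold relaxed_proj at 1. rewrite Hp. unfold y. rewrite Hbe. simpl.
  f_equal; [f_equal|].
  - field; lra.
  - unfold Q in *. field; repeat split; lra.
  - ring.
Qed.

Lemma avoid_nbhd (C : nat -> R -> Prop) al : (forall n, closed_set (C n)) -> (forall n, ~ C n al) ->
  forall N, exists rho, 0 < rho /\ forall a2, Rabs (a2 - al) < rho -> forall n, (n <= N)%nat -> ~ C n a2.
Proof.
  intros Hcl Hn N. induction N as [|N IH].
  - destruct (Hcl 0%nat al (Hn 0%nat)) as [d Hd]. exists d. split; [apply cond_pos|].
    intros a2 ha n hn. assert (n = 0%nat) by lia. subst. apply (Hd a2). unfold disc. exact ha.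
  - destruct IH as [r [hr Hr]].
    destruct (Hcl (S N) al (Hn (S N))) as [d Hd].
    exists (Rmin r d). split; [apply Rmin_pos; auto; apply cond_pos|].
    intros a2 ha n hn.
    destruct (Nat.eq_dec n (S N)) as [->|hne].
    + apply (Hd a2). unfold disc. eapply Rlt_le_trans; [exact ha|apply Rmin_r].
    + apply (Hr a2); [eapply Rlt_le_trans; [exact ha|apply Rmin_l]|lia].
Qed.

Lemma A3_closed C : closed3 (A3 C).
Proof. apply Hset_closed. Qed.
Lemma A3_convex C : convex3 (A3 C).
Proof. apply Hset_convex. Qed.
Lemma A3_nonempty C : nonempty3 (A3 C).
Proof. exists (1+1, 1/1+1, 1/1). apply A3_interior; lra. Qed.

Lemma lin_limit c d : (forall e, 0 < e -> 0 <= c + e * d) -> 0 <= c.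
Proof.
  intro H. apply Rnot_lt_le. intro hc.
  set (e := - c / (2 * (Rabs d + 1))).
  assert (he : 0 < e) by (unfold e; pose proof (Rabs_pos d); apply Rdiv_lt_0_compat; lra).
  specialize (H e he).
  assert (e * d <= e * Rabs d) by (apply Rmult_le_compat_l; [lra|apply Rle_abs]).
  assert (e * (Rabs d + 1) = - c / 2) by (unfold e; field; pose proof (Rabs_pos d); lra).
  lra.
Qed.

Lemma no_fix C al x : (forall n, closed_set (C n)) -> 0 < al <= 1 -> (forall n, ~ C n al) ->
  relaxed_proj al (A3 C) (relaxed_proj al A2 (relaxed_proj al A1 x)) <> x.
Proof.
  intros Hcl Hal Hn Hfix.
  destruct x as [[x1 x2] x3]. rewrite relaxed_A1, relaxed_A2 in Hfix.
  set (y := ((1 - al) * x1, (1 - al) * ((1 - al) * x2), x3)) in *.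
  assert (Hnear : is_nearest (A3 C) y (proj (A3 C) y)).
  { unfold proj. apply epsilon_spec. apply nearest_exists; auto using A3_nonempty, A3_convex, A3_closed. }
  assert (Hvar := nearest_var _ _ _ (A3_convex C) Hnear).
  destruct Hnear as [HpA _].
  unfold relaxed_proj in Hfix.
  destruct (proj (A3 C) y) as [[p1 p2] p3] eqn:Hp.
  unfold y in Hfix. simpl in Hfix. injection Hfix as e1 e2 e3.
  assert (Hr := rr_range al ltac:(lra)).
  destruct (fourth_root_pos (rr al) ltac:(lra)) as [t [ht ht4]].
  assert (Htb := t_bounds t ht ltac:(lra)).
  assert (Hb : exists b, al = 1 - b) by (exists (1 - al); ring). destruct Hb as [b Hbe].
  assert (hb : 0 <= b < 1) by lra.
  rewrite Hbe in e1, e2, e3. rewrite Hbe, rr_b in ht4.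
  pose proof (Q_pos b) as hQ.
  assert (ex1 : b * x1 - p1 = - p1 / (1+b)).
  { assert ((1 - b) * (1 + b) * x1 = (1 - b) * p1) by nra.
    assert (x1 = p1/(1+b)).
    { apply Rmult_eq_reg_l with ((1-b)*(1+b)); [|nra]. rewrite H. field. lra. }
    rewrite H0. field. lra. }
  assert (ex2 : b * (b * x2) - p2 = - (1+b) * p2 / (1 + b + b^2)).
  { assert ((1 - b) * (1 + b + b^2) * x2 = (1 - b) * p2) by nra.
    assert (x2 = p2/(1+b+b^2)).
    { apply Rmult_eq_reg_l with ((1-b)*(1+b+b^2)); [|nra]. rewrite H. field. lra. }
    rewrite H0. field. lra. }
  assert (ex3 : x3 = p3).
  { apply Rmult_eq_reg_l with (1 - b); [|lra]. lra. }
  set (W1 := 1/(1+b)). set (W2 := (1+b)/(1+b+b^2)).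
  assert (hW1 : 0 < W1) by (unfold W1; apply Rdiv_lt_0_compat; lra).
  assert (hW2 : W2 = W1 * t^4) by (unfold W1, W2; rewrite ht4; field; lra).
  assert (hW2p : 0 < W2) by (rewrite hW2; apply Rmult_lt_0_compat; auto; apply pow_lt; auto).
  assert (Hc : 0 <= W1 * p1 * (t - p1) + W2 * p2 * (1/t - p2)).
  { apply lin_limit with (W1 * p1 + W2 * p2). intros e he.
    specialize (Hvar _ (A3_interior C t e ht he)).
    unfold y in Hvar. rewrite Hbe in Hvar. simpl in Hvar.
    replace ((1 - (1 - b)) * x1 + -1 * p1) with (b * x1 - p1) in Hvar by ring.
    replace ((1 - (1 - b)) * ((1 - (1 - b)) * x2) + -1 * p2) with (b * (b * x2) - p2) in Hvar by ring.
    rewrite ex1, ex2, ex3 in Hvar.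
    replace (- p1 / (1 + b)) with (- W1 * p1) in Hvar by (unfold W1; field; lra).
    replace (- (1 + b) * p2 / (1 + b + b ^ 2)) with (- W2 * p2) in Hvar by (unfold W2; field; lra).
    replace (p3 + -1 * p3) with 0 in Hvar by ring.
    nra. }
  pose proof (A3_elim1 C p1 p2 p3 t HpA ht) as hc.
  assert (Hsum : W1 * p1 * (t - p1) + W2 * p2 * (1/t - p2) + W1 * t^2 * (p1/t + t*p2 - 2)
                 = - W1 * (t - p1)^2 - W2 * (1/t - p2)^2).
  { rewrite hW2. field. lra. }
  assert (0 <= W1 * t^2 * (p1/t + t*p2 - 2)).
  { apply Rmult_le_pos; [apply Rmult_le_pos; [lra|apply pow2_ge_0]|lra]. }
  assert (0 <= W1 * (t - p1)^2) by (apply Rmult_le_pos; [lra|apply pow2_ge_0]).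
  assert (0 <= W2 * (1/t - p2)^2) by (apply Rmult_le_pos; [lra|apply pow2_ge_0]).
  assert (q1 : (t - p1)^2 = 0).
  { assert (hz : W1 * (t - p1)^2 = 0) by lra. apply Rmult_integral in hz as [h|h]; lra. }
  assert (q2 : (1/t - p2)^2 = 0).
  { assert (hz : W2 * (1/t - p2)^2 = 0) by lra. apply Rmult_integral in hz as [h|h]; lra. }
  assert (P1e : p1 = t) by nra. assert (P2e : p2 = 1/t) by nra.
  subst p1 p2.
  destruct (INR_archimed 1 (Rmax p3 1) ltac:(lra)) as [N HN]. rewrite Rmult_1_r in HN.
  assert (HN1 : (1 <= N)%nat).
  { destruct N; [simpl in HN; pose proof (Rmax_r p3 1); lra | lia]. }
  assert (HNp : p3 < INR N) by (pose proof (Rmax_l p3 1); lra).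
  destruct (avoid_nbhd C al Hcl Hn N) as [rho [hrho Hrho]].
  set (m := rho^2 * al^2 / (4 * 81 * 1024)).
  assert (hm : 0 < m).
  { unfold m. apply Rdiv_lt_0_compat; [|lra]. apply Rmult_lt_0_compat; apply pow_lt; lra. }
  set (A := INR N * INR N + INR N / m).
  assert (Hidx : idx C N t A).
  { split; [auto|]. split; [auto|]. split.
    - unfold A. pose proof (pos_INR N). assert (0 <= INR N / m) by (apply Rle_mult_inv_pos; lra). lra.
    - intros a2 t2 ha2 [n [hn hC]] ht2 ht24.
      assert (Hfar : rho <= Rabs (a2 - al)).
      { apply Rnot_lt_le. intro hlt. apply (Hrho a2 hlt n hn hC). }
      assert (Hr2 := rr_range a2 ha2).
      assert (Ht2b := t_bounds t2 ht2 ltac:(lra)).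
      assert (Hsep := rr_sep al a2 ltac:(lra) ha2).
      assert (Hd := t4_diff t t2 Htb Ht2b).
      assert (Hsl := sig_lower t t2 Htb Ht2b).
      rewrite Hbe, rr_b in Hsep. rewrite <- ht4 in Hsep. rewrite ht24 in Hd.
      rewrite <- Hbe in Hsep.
      assert (Hrho2 : rho^2 <= (al - a2)^2).
      { replace ((al - a2)^2) with (Rabs (a2 - al) * Rabs (a2 - al)).
        - simpl. rewrite Rmult_1_r. apply Rmult_le_compat; lra.
        - rewrite <- Rabs_mult. rewrite Rabs_right; [ring|]. apply Rle_ge. replace ((a2 - al) * (a2 - al)) with ((a2-al)^2) by ring. apply pow2_ge_0. }
      assert (Hm : m <= sig t t2 (1/t2)).
      { unfold m.
        assert (rho^2 * al^2 <= (al - a2)^2 * al^2) by (apply Rmult_le_compat_r; [apply pow2_ge_0|auto]).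
        lra. }
      pose proof (pos_INR N).
      assert (0 <= sig t t2 (1/t2)) by lra.
      unfold A. rewrite Rmult_plus_distr_r.
      assert (0 <= INR N * INR N * sig t t2 (1 / t2)) by (apply Rmult_le_pos; [nra|lra]).
      assert (INR N <= INR N / m * sig t t2 (1 / t2)).
      { replace (INR N) with (INR N / m * m) at 1 by (field; lra).
        apply Rmult_le_compat_l; [apply Rle_mult_inv_pos; lra|lra]. }
      lra. }
  pose proof (A3_elim2 C t (1/t) p3 N t A HpA Hidx) as Hz.
  replace (A / t * t + A * t * (1/t)) with (2 * A) in Hz by (field; lra).
  lra.
Qed.

Theorem proposition2 (F : R -> Prop)
  (HF01 : forall a, F a -> 0 <= a <= 1)
  (HFs : F_sigma F)
  (HF0 : F 0)
  (k : nat) (hk : (3 <= k)%nat) :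
  exists A : nat -> vec3 -> Prop,
    (forall i, (1 <= i <= k)%nat -> nonempty3 (A i) /\ convex3 (A i) /\ closed3 (A i)) /\
    (forall alpha, F alpha <->
       (0 <= alpha <= 1 /\ exists x, comp_relaxed A alpha k x = x)).
Proof.
  destruct HFs as [C [Hcl Hiff]].
  exists (Afam (A3 C)). split.
  - intros i hi. destruct i as [|[|[|[|i]]]]; [lia| | | |].
    + split; [exists (0,0,0); apply A1_mem; auto|split; [apply Hset_convex|apply Hset_closed]].
    + split; [exists (0,0,0); apply A2_mem; auto|split; [apply Hset_convex|apply Hset_closed]].
    + split; [apply A3_nonempty|split; [apply Hset_convex|apply Hset_closed]].
    + simpl. split; [exists (0,0,0); intros c1 c2 c3 c0 []|split; [apply Hset_convex|apply Hset_closed]].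
  - intro al. split.
    + intro HF. pose proof (HF01 _ HF) as Hal. split; auto.
      destruct (Req_dec al 0) as [->|hne].
      * exists (0,0,0). apply comp_zero.
      * apply Hiff in HF as [n Hn]. destruct (fix_exists C al n ltac:(lra) Hn) as [x Hx].
        exists x. rewrite comp_Afam; auto.
    + intros [Hal [x Hx]]. destruct (Req_dec al 0) as [->|hne]; auto.
      apply NNPP; intro HnF. apply (no_fix C al x Hcl); [lra| |].
      * intros n hC; apply HnF; apply Hiff; exists n; auto.
      * rewrite <- (comp_Afam (A3 C) al k x hk). exact Hx.
Qed.
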